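(* For all integers $n\geq 1$, $m\geq 0$, $\operatorname{diam}(Y_{n,m})=\operatorname{ecc}_{Z_{n,m}}(0)$, where $\operatorname{ecc}_{Z_{n,m}}(0)$ is the maximum graph distance in $Z_{n,m}$ from the all-zero vertex $0$ to any vertex.
   Context: Elements of $\mathbb{Z}_n$ are identified with their representatives in $\{0,\dots,n-1\}$. For a subset $S\subseteq\mathbb{Z}$, consider vertices $u=(u_0,\dots,u_{m+1})\in\mathbb{Z}_n\times S^m\times\mathbb{Z}_n$ with $\sum_{i=0}^{m+1}u_i\equiv0\pmod n$; two such vertices $u,v$ are adjacent if there is $0\leq i\leq m$ such that $u_j=v_j$ for all $j\notin\{i,i+1\}$ and either ($u_i=v_i+1$, $u_{i+1}=v_{i+1}-1$) or ($u_i=v_i-1$, $u_{i+1}=v_{i+1}+1$), with arithmetic in coordinates $0,m+1$ taken in $\mathbb{Z}_n$ and in coordinates $1,\dots,m$ in $\mathbb{Z}$. The Yoke graph $Y_{n,m}$ is this graph for $S=\{0,1\}$; the dYoke graph $Z_{n,m}$ is this graph for $S=\{-1,0,1\}$. The vertex $(0,\dots,0)$ is denoted $0$. *)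

(* Defs.v *)
From HB Require Import structures.
From mathcomp Require Import all_boot all_order all_algebra.
Set Implicit Arguments. Unset Strict Implicit. Unset Printing Implicit Defensive.
Import Order.TTheory GRing.Theory Num.Theory.
Local Open Scope ring_scope.

(* Vertices of Y_{n,m} / Z_{n,m}: functions u : 'I_(m+2) -> int,
   coordinate 0 and m+1 represent elements of Z_n (representatives in
   {0,..,n-1}), coordinates 1..m lie in S. *)
Definition vtx (m : nat) := {ffun 'I_m.+2 -> int}.

Definition is_end (m : nat) (j : 'I_m.+2) : bool :=
  (val j == 0%N) || (val j == m.+1).

Definition valid (n m : nat) (S : pred int) (u : vtx m) : bool :=
  [forall j : 'I_m.+2,
     if is_end j then (0 <= u j) && (u j < n%:Z) else S (u j)]
  && (((\sum_(j < m.+2) u j) %% n%:Z)%Z == 0).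

Definition coord_eq (n m : nat) (j : 'I_m.+2) (a b : int) : bool :=
  if is_end j then ((a - b) %% n%:Z)%Z == 0 else a == b.

Definition moved (n m : nat) (d : int) (i : 'I_m.+1) (u v : vtx m) : bool :=
  [forall j : 'I_m.+2,
     coord_eq n j (u j)
       (v j + (if val j == val i then d
               else if val j == (val i).+1 then - d else 0))].

Definition adj (n m : nat) (S : pred int) : rel (vtx m) :=
  fun u v => [&& valid n S u, valid n S v &
     [exists i : 'I_m.+1, moved n 1 i u v || moved n (-1) i u v]].

Definition S01 : pred int := fun x => (x == 0) || (x == 1).
Definition Sm101 : pred int := fun x => [|| x == -1, x == 0 | x == 1].

Definition Yoke_adj (n m : nat) : rel (vtx m) := adj n S01.
Definition Yoke_vtx (n m : nat) : pred (vtx m) := valid n S01.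
Definition dYoke_adj (n m : nat) : rel (vtx m) := adj n Sm101.
Definition dYoke_vtx (n m : nat) : pred (vtx m) := valid n Sm101.

Definition zero_vtx (m : nat) : vtx m := [ffun => 0].

Definition is_dist (T : eqType) (e : rel T) (x y : T) (d : nat) : Prop :=
  (exists p : seq T, [/\ path e x p, last x p = y & size p = d]) /\
  (forall p : seq T, path e x p -> last x p = y -> (d <= size p)%N).

Definition is_ecc (T : eqType) (V : pred T) (e : rel T) (x : T) (r : nat) : Prop :=
  (forall y, V y -> exists2 d, is_dist e x y d & (d <= r)%N) /\
  (exists2 y, V y & is_dist e x y r).

Definition is_diam (T : eqType) (V : pred T) (e : rel T) (D : nat) : Prop :=
  (forall x y, V x -> V y -> exists2 d, is_dist e x y d & (d <= D)%N) /\
  (exists x y, [/\ V x, V y & is_dist e x y D]).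

Arguments Yoke_adj n m : clear implicits.
Arguments Yoke_vtx n m : clear implicits.
Arguments dYoke_adj n m : clear implicits.
Arguments dYoke_vtx n m : clear implicits.
Arguments zero_vtx m : clear implicits.

(* Main.v *)
Require Import Defs.
From mathcomp Require Import all_boot all_order all_algebra zify.
From Stdlib Require Import Classical.
Set Implicit Arguments. Unset Strict Implicit. Unset Printing Implicit Defensive.
Import Order.TTheory GRing.Theory Num.Theory.
Local Open Scope ring_scope.

Lemma dvd_submod (n a : int) : (n %| a - (a %% n)%Z)%Z.
Proof.
rewrite {1}(divz_eq a n) addrK. by apply: dvdz_mull.
Qed.

Lemma dvd_eq_small (n : nat) (a b : int) : 0 <= a < n%:Z -> 0 <= b < n%:Z ->
  (n%:Z %| a - b)%Z -> a = b.
Proof.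
move=> ha hb /dvdz_mod0P h.
have : (a %% n%:Z)%Z = (b %% n%:Z)%Z.
  by apply/eqP; rewrite eqz_mod_dvd; apply/dvdz_mod0P.
by rewrite !modz_small.
Qed.

Definition X (m : nat) (u : vtx m) (k : nat) : int := u (inord k).

Lemma XE m (u : vtx m) (t : 'I_m.+2) : u t = X u (val t).
Proof. by rewrite /X inord_val. Qed.

Definition admD (n m : nat) (dl g : nat -> int) : Prop :=
  [/\ (n%:Z %| dl 0%N + g 0%N)%Z, (n%:Z %| dl m.+1 - g m)%Z &
      forall k, (0 < k <= m)%N -> dl k = g k.-1 - g k].

Definition adm (n m : nat) (x y : vtx m) (g : nat -> int) : Prop :=
  admD n m (fun k => X y k - X x k) g.

Definition cost (m : nat) (g : nat -> int) : nat := (\sum_(i < m.+1) `|g i|)%N.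

Lemma sum_ind (V : nmodType) (N k : nat) (a : V) : (k < N)%N ->
  \sum_(i < N) (if val i == k then a else 0) = a.
Proof.
move=> hk; rewrite (bigD1 (Ordinal hk)) //= eqxx big1 ?addr0 // => i hi.
case: eqP => // e; case/eqP: hi; exact: val_inj.
Qed.

Lemma sum_ind_nat (N k : nat) (a : nat) : (k < N)%N ->
  (\sum_(i < N) (if val i == k then a else 0%N))%N = a.
Proof. exact: (@sum_ind nat). Qed.

Lemma sum_cong (n : int) (N : nat) (u v c : 'I_N -> int) :
  (forall t, (n %| u t - v t - c t)%Z) ->
  (n %| \sum_t u t - \sum_t v t - \sum_t c t)%Z.
Proof.
move=> h; rewrite -!sumrB; apply: rpred_sum => t _; exact: h.
Qed.

Definition del (m : nat) (d : int) (i : 'I_m.+1) (k : nat) : int :=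
  if k == val i then d else if k == (val i).+1 then - d else 0.

Lemma ce_dvd n m (t : 'I_m.+2) a b : coord_eq n t a b -> (n%:Z %| a - b)%Z.
Proof.
rewrite /coord_eq; case: ifP => _; first by move/eqP/dvdz_mod0P.
by move/eqP->; rewrite subrr dvdz0.
Qed.

Lemma ce_mid n m (t : 'I_m.+2) a b : ~~ is_end t -> coord_eq n t a b -> a = b.
Proof. by rewrite /coord_eq => /negbTE ->; move/eqP. Qed.

Lemma ce_eq n m (t : 'I_m.+2) a b : a = b -> coord_eq n t a b.
Proof. move=> ->; rewrite /coord_eq; case: ifP => _ //; by rewrite subrr mod0z. Qed.

Lemma ce_end n m (t : 'I_m.+2) a b : is_end t -> (n%:Z %| a - b)%Z -> coord_eq n t a b.
Proof. by rewrite /coord_eq => -> /dvdz_mod0P ->. Qed.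

Lemma movedP n m d (i : 'I_m.+1) u v :
  moved n d i u v -> forall t : 'I_m.+2, coord_eq n t (u t) (v t + del d i (val t)).
Proof. by move/forallP. Qed.

Lemma sum_del m d (i : 'I_m.+1) : \sum_(t < m.+2) del d i (val t) = 0.
Proof.
rewrite /del.
rewrite (eq_bigr (fun t : 'I_m.+2 => (if val t == val i then d else 0) +
                     (if val t == (val i).+1 then -d else 0))); last first.
  move=> t _; case: eqP => [->|_]; last by rewrite add0r.
  by rewrite eqn_leq ltnn andbF addr0.
rewrite big_split /= !sum_ind ?subrr //.
  by have := ltn_ord i; rewrite -ltnS.
by have := ltn_ord i => /leqW.
Qed.

Lemma moved_sum n m d (i : 'I_m.+1) u v : moved n d i u v ->
  (n%:Z %| \sum_t u t - \sum_t v t)%Z.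
Proof.
move=> /movedP h.
have := @sum_cong n%:Z m.+2 u v (fun t => del d i (val t)).
rewrite sum_del subr0; apply => t; rewrite -addrA -opprD; exact: ce_dvd.
Qed.

Lemma valid_sum n m S (u : vtx m) : valid n S u -> (n%:Z %| \sum_t u t)%Z.
Proof. by case/andP => _ /eqP/dvdz_mod0P. Qed.

Lemma valid_pt n m S (u : vtx m) (t : 'I_m.+2) : valid n S u ->
  if is_end t then (0 <= u t) && (u t < n%:Z) else S (u t).
Proof. by case/andP => /forallP. Qed.

Lemma validI n m S (u : vtx m) :
  (forall t : 'I_m.+2, if is_end t then (0 <= u t) && (u t < n%:Z) else S (u t)) ->
  (n%:Z %| \sum_t u t)%Z -> valid n S u.
Proof. by move=> h1 /dvdz_mod0P h2; apply/andP; split; [apply/forallP|apply/eqP]. Qed.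

Lemma moved_sym n m d (i : 'I_m.+1) u v : moved n d i u v -> moved n (-d) i v u.
Proof.
move=> /movedP h; apply/forallP => t.
change (coord_eq n t (v t) (u t + del (-d) i (val t))); have := h t.
have -> : del (-d) i (val t) = - del d i (val t).
  by rewrite /del; case: eqP => _ //; case: eqP => _ //; rewrite oppr0.
rewrite /coord_eq; case: ifP => _.
  move/eqP/dvdz_mod0P => hd; apply/eqP/dvdz_mod0P.
  by rewrite (_ : _ - _ = - (u t - (v t + del d i (val t)))) ?rpredN //; lia.
by move/eqP->; rewrite -addrA subrr addr0.
Qed.

Lemma adj_sym n m S (u v : vtx m) : adj n S u v -> adj n S v u.
Proof.
case/and3P => hu hv /existsP [i hi]; apply/and3P; split => //.
apply/existsP; exists i; case/orP: hi => /moved_sym h.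
  by rewrite h orbT.
by rewrite opprK in h; rewrite h.
Qed.

Lemma dvdB3 (n a b c : int) : (n %| a)%Z -> (n %| b)%Z -> c = a - b -> (n %| c)%Z.
Proof. by move=> ha hb ->; apply: rpredB. Qed.

Lemma dvdD3 (n a b c : int) : (n %| a)%Z -> (n %| b)%Z -> c = a + b -> (n %| c)%Z.
Proof. by move=> ha hb ->; apply: rpredD. Qed.

Lemma movedX n m d (i : 'I_m.+1) u v : moved n d i u v -> forall k, (k <= m.+1)%N ->
  coord_eq n (inord k : 'I_m.+2) (X u k) (X v k + del d i k).
Proof.
move=> hm k hk; have := movedP hm (inord k).
have e : val (inord k : 'I_m.+2) = k by apply: inordK.
by rewrite e.
Qed.

Lemma is_end_inord m k : (k <= m.+1)%N -> is_end (inord k : 'I_m.+2) = (k == 0%N) || (k == m.+1).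
Proof.
move=> hk; have e : val (inord k : 'I_m.+2) = k by apply: inordK.
by rewrite /is_end e.
Qed.

Lemma adj_moved n m S (u v : vtx m) : adj n S u v ->
  exists (d : int) (i : 'I_m.+1), (d = 1 \/ d = -1) /\ moved n d i u v.
Proof.
case/and3P => _ _ /existsP [i /orP [h|h]]; [exists 1 | exists (-1)]; exists i; auto.
Qed.

Lemma path_lower n m S : forall (p : seq (vtx m)) (x : vtx m),
  path (adj n S) x p -> exists g, adm n x (last x p) g /\ (cost m g <= size p)%N.
Proof.
elim => [|x1 p IH] x /=.
  move=> _; exists (fun _ => 0); split; last by rewrite /cost big1.
  by split => [|| k _]; rewrite ?subrr ?addr0 ?dvdz0.
case/andP => hadj /IH [g1 [[h0 h1 hmid] hc]].
have [d [i [hd hm]]] := adj_moved hadj.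
have hi : (val i < m.+1)%N := ltn_ord i.
exists (fun k => g1 k + (if k == val i then d else 0)); split; last first.
  rewrite /cost.
  apply: (@leq_trans (\sum_(k < m.+1) (`|g1 k| + (if val k == val i then 1 else 0)))%N).
    by apply: leq_sum => k _; case: eqP => _; lia.
  by rewrite big_split /= sum_ind_nat // addn1 ltnS.
split.
- have := ce_dvd (movedX hm (leq0n _)); rewrite /del.
  case: (eqVneq 0%N (val i)) => [e|ne] /= hx.
    apply: (dvdB3 h0 hx); lia.
  apply: (dvdB3 h0 hx); lia.
- have := ce_dvd (movedX hm (leqnn _)); rewrite /del.
  rewrite (_ : (m.+1 == val i) = false); last by lia.
  rewrite eqSS; case: (eqVneq m (val i)) => [e|ne] /= hx.
    apply: (dvdB3 h1 hx); lia.
  apply: (dvdB3 h1 hx); lia.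
- move=> k hk; have hk' : (k <= m.+1)%N by case/andP: hk => _ /leqW.
  have := ce_mid _ (movedX hm hk').
  rewrite is_end_inord // => /(_ _) hx.
  have {hx} hx : X x k = X x1 k + del d i k.
    by apply: hx; case/andP: hk => hh1 hh2; apply/norP; split; lia.
  have := hmid k hk; rewrite /del in hx.
  case/andP: hk => hk1 hk2.
  have -> : (k.-1 == val i) = (k == (val i).+1) by lia.
  case: (eqVneq k (val i)) hx => [e|ne] hx.
    have -> : (k == (val i).+1) = false by lia.
    lia.
  case: (eqVneq k (val i).+1) hx => [e|ne2] hx; lia.
Qed.

Lemma find_right (m : nat) (lo hi : int) (Xf Yf g : nat -> int) :
  (forall k, (0 < k <= m)%N -> lo <= Yf k <= hi) ->
  (forall k, (0 < k <= m)%N -> lo <= Xf k <= hi) ->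
  (forall k, (0 < k <= m)%N -> Yf k - Xf k = g k.-1 - g k) -> lo < hi ->
  forall j, (j <= m)%N -> 0 < g j -> (j == 0%N) || (lo < Xf j) ->
  exists j', [/\ (j' <= m)%N, 0 < g j', (j' == 0%N) || (lo < Xf j') &
                 (j' == m) || (Xf j'.+1 < hi)].
Proof.
move=> hY hX hd hlh j hj.
move: {2}(m - j)%N (erefl (m - j)%N) => t; elim: t j hj => [|t IH] j hj ht hg hD.
  have e : j = m by lia.
  by exists j; rewrite e eqxx; split => //; rewrite -e.
case: (ltP (Xf j.+1) hi) => hlt.
  by exists j; rewrite hlt orbT.
have hk : (0 < j.+1 <= m)%N by lia.
have := hY _ hk; have := hX _ hk; have := hd _ hk => /= e h1 h2.
apply: (IH j.+1); [lia|lia|lia|].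
apply/orP; right; lia.
Qed.

Lemma find_left (m : nat) (lo hi : int) (Xf Yf g : nat -> int) :
  (forall k, (0 < k <= m)%N -> lo <= Yf k <= hi) ->
  (forall k, (0 < k <= m)%N -> lo <= Xf k <= hi) ->
  (forall k, (0 < k <= m)%N -> Yf k - Xf k = g k.-1 - g k) ->
  forall j, (j <= m)%N -> 0 < g j ->
  exists j', [/\ (j' <= m)%N, 0 < g j' & (j' == 0%N) || (lo < Xf j')].
Proof.
move=> hY hX hd; elim => [|j IH] hj hg; first by exists 0%N.
case: (ltP lo (Xf j.+1)) => hlt.
  by exists j.+1; rewrite hlt orbT.
have hk : (0 < j.+1 <= m)%N by lia.
have := hY _ hk; have := hX _ hk; have := hd _ hk => /= e h1 h2.
apply: IH; lia.
Qed.

Lemma valid_mid n m S (u : vtx m) k : valid n S u -> (0 < k <= m)%N -> S (X u k).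
Proof.
move=> hv hk; have := valid_pt (inord k) hv.
by rewrite is_end_inord; [case: ifP => //; lia | lia].
Qed.

Lemma valid_end0 n m S (u : vtx m) : valid n S u -> 0 <= X u 0 < n%:Z.
Proof. by move=> hv; have := valid_pt (inord 0) hv; rewrite is_end_inord. Qed.

Lemma valid_end1 n m S (u : vtx m) : valid n S u -> 0 <= X u m.+1 < n%:Z.
Proof. by move=> hv; have := valid_pt (inord m.+1) hv; rewrite is_end_inord // eqxx orbT. Qed.

Lemma Xinord m (u : vtx m) (t : 'I_m.+2) : X u (val t) = u t.
Proof. by rewrite /X inord_val. Qed.

Lemma step n m S (lo hi : int) (hS : forall z, S z = (lo <= z <= hi)) (hlh : lo < hi)
  (hn : (0 < n)%N) (x y : vtx m) (g : nat -> int) j0 :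
  valid n S x -> valid n S y -> adm n x y g -> (j0 <= m)%N -> 0 < g j0 ->
  exists x1 g', [/\ adj n S x x1, valid n S x1, adm n x1 y g' & (cost m g').+1 = cost m g].
Proof.
move=> hx hy [h0 h1 hmid] hj0 hg0.
have hXm : forall k, (0 < k <= m)%N -> lo <= X x k <= hi.
  by move=> k hk; rewrite -hS; apply: valid_mid hx hk.
have hYm : forall k, (0 < k <= m)%N -> lo <= X y k <= hi.
  by move=> k hk; rewrite -hS; apply: valid_mid hy hk.
have [j1 [hj1 hg1 hD1]] := find_left hYm hXm hmid hj0 hg0.
have [j [hj hg hD hI]] := find_right hYm hXm hmid hlh hj1 hg1 hD1.
pose x1 : vtx m := [ffun t : 'I_m.+2 => if val t == j then
    (if j == 0%N then ((X x j - 1) %% n%:Z)%Z else X x j - 1)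
  else if val t == j.+1 then
    (if j == m then ((X x j.+1 + 1) %% n%:Z)%Z else X x j.+1 + 1)
  else x t].
have hX1 : forall k, (k <= m.+1)%N -> X x1 k = if k == j then
    (if j == 0%N then ((X x j - 1) %% n%:Z)%Z else X x j - 1)
  else if k == j.+1 then
    (if j == m then ((X x j.+1 + 1) %% n%:Z)%Z else X x j.+1 + 1)
  else X x k.
  move=> k hk; rewrite /X ffunE.
  have e : val (inord k : 'I_m.+2) = k by apply: inordK.
  by rewrite e.
pose i : 'I_m.+1 := inord j.
have hiv : val i = j by apply: inordK; rewrite ltnS.
have hx1end : forall t : 'I_m.+2, is_end t = (val t == 0%N) || (val t == m.+1) by [].
have hmv : moved n 1 i x x1.
  apply/forallP => t.
  change (coord_eq n t (x t) (x1 t + del 1 i (val t))).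
  have ht : (val t <= m.+1)%N by have := ltn_ord t.
  rewrite -!Xinord hX1 // /del hiv.
  case: (eqVneq (val t) j) => [e|ne].
    case: (eqVneq j 0%N) => [e0|ne0].
      apply: ce_end; first by rewrite hx1end e e0.
      rewrite e e0; apply: (dvdB3 (dvd_submod n%:Z (X x 0 - 1)) (dvdz0 _)); lia.
    apply: ce_eq; rewrite e; lia.
  case: (eqVneq (val t) j.+1) => [e|ne2].
    case: (eqVneq j m) => [e0|ne0].
      apply: ce_end; first by rewrite hx1end e e0 eqxx orbT.
      rewrite e; apply: (dvdB3 (dvd_submod n%:Z (X x j.+1 + 1)) (dvdz0 _)); lia.
    apply: ce_eq; rewrite e; lia.
  apply: ce_eq; lia.
have hv1 : valid n S x1.
  apply: validI.
    move=> t; have ht : (val t <= m.+1)%N by have := ltn_ord t.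
    rewrite -Xinord hX1 // hx1end hS.
    case: (eqVneq (val t) j) => [e|ne].
      case: (eqVneq j 0%N) => [e0|ne0].
        rewrite e e0 /=; apply/andP; split; lia.
      have -> : (val t == 0%N) || (val t == m.+1) = false by lia.
      have := hXm j; move: hD; rewrite (negbTE ne0) /= => hD hXj.
      have {}hXj := hXj ltac:(lia).
      apply/andP; split; lia.
    case: (eqVneq (val t) j.+1) => [e|ne2].
      case: (eqVneq j m) => [e0|ne0].
        rewrite e e0 eqxx orbT; apply/andP; split; lia.
      have -> : (val t == 0%N) || (val t == m.+1) = false by lia.
      have := hXm j.+1; move: hI; rewrite (negbTE ne0) /= => hI hXj.
      have {}hXj := hXj ltac:(lia).
      apply/andP; split; lia.
    have := valid_pt t hx; rewrite hx1end hS Xinord.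
    by [].
  have := moved_sum hmv; have := valid_sum hx => a b.
  apply: (dvdB3 a b); lia.
exists x1, (fun k => g k - (if k == j then 1 else 0)); split => //.
- apply/and3P; split => //; apply/existsP; exists i; by rewrite hmv.
- split.
  + rewrite hX1 //.
    case: (eqVneq 0%N j) => [e|ne].
      rewrite -e; apply: (dvdD3 h0 (dvd_submod n%:Z (X x 0 - 1))); lia.
    rewrite (_ : (0%N == j.+1) = false) //; apply: (dvdB3 h0 (dvdz0 _)); lia.
  + rewrite hX1 // (_ : (m.+1 == j) = false); last by lia.
    rewrite eqSS; case: (eqVneq m j) => [e|ne].
      rewrite -e; apply: (dvdD3 h1 (dvd_submod n%:Z (X x m.+1 + 1))); lia.
    apply: (dvdB3 h1 (dvdz0 _)); lia.
  + move=> k hk; have := hmid k hk; rewrite hX1; last by lia.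
    have -> : (k.-1 == j) = (k == j.+1) by lia.
    case: (eqVneq k j) => [e|ne].
      have -> : (j == 0%N) = false by lia.
      have -> : (k == j.+1) = false by lia.
      subst k; lia.
    case: (eqVneq k j.+1) => [e|ne2].
      have -> : (j == m) = false by lia.
      subst k; lia.
    lia.
- rewrite /cost.
  have -> : (\sum_(k < m.+1) `|g k|)%N = (\sum_(k < m.+1) (`|g k - (if val k == j then (1:int) else 0)| + (if val k == j then 1 else 0)))%N.
    apply: eq_bigr => k _; case: (eqVneq (val k) j) => [e|ne]; last by lia.
    rewrite e in hg *; lia.
  by rewrite big_split /= sum_ind_nat // addn1.
Qed.

Lemma adm_sym n m (x y : vtx m) g : adm n x y g -> adm n y x (fun k => - g k).
Proof.
case=> h0 h1 hm; split.
- by apply: (dvdB3 (dvdz0 _) h0); lia.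
- by apply: (dvdB3 (dvdz0 _) h1); lia.
- by move=> k hk; have := hm k hk; lia.
Qed.

Lemma cost_opp m g : cost m (fun k => - g k) = cost m g.
Proof. by apply: eq_bigr => k _; rewrite abszN. Qed.

Lemma cost0 m g : cost m g = 0%N -> forall k, (k <= m)%N -> g k = 0.
Proof.
move/eqP; rewrite /cost sum_nat_eq0 => /forallP h k hk.
by have := h (Ordinal (hk : (k < m.+1)%N)); rewrite /= absz_eq0 => /eqP.
Qed.

Lemma path_upper n m S (lo hi : int) (hS : forall z, S z = (lo <= z <= hi)) (hlh : lo < hi)
  (hn : (0 < n)%N) : forall k (x y : vtx m) g,
  valid n S x -> valid n S y -> adm n x y g -> cost m g = k ->
  exists p, [/\ path (adj n S) x p, last x p = y & size p = k].
Proof.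
elim => [|k IH] x y g hx hy ha hc.
  exists [::]; split => //=.
  have hg := cost0 hc; case: ha => h0 h1 hm.
  apply/ffunP => t; rewrite -!Xinord.
  have ht : (val t <= m.+1)%N by have := ltn_ord t.
  case: (eqVneq (val t) 0%N) => [e|ne].
    rewrite e; symmetry; apply: (dvd_eq_small (valid_end0 hy) (valid_end0 hx)).
    by apply: (dvdB3 h0 (dvdz0 _)); rewrite hg //; lia.
  case: (eqVneq (val t) m.+1) => [e|ne2].
    rewrite e; symmetry; apply: (dvd_eq_small (valid_end1 hy) (valid_end1 hx)).
    by apply: (dvdB3 h1 (dvdz0 _)); rewrite hg //; lia.
  have hk : (0 < val t <= m)%N by lia.
  have := hm _ hk; rewrite !hg; try lia.
  by rewrite subr0 => /eqP; rewrite subr_eq0 => /eqP ->.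
case: (boolP [exists i : 'I_m.+1, g i != 0]) => [/existsP [i hgi] | hall]; last first.
  exfalso; move: hc; rewrite /cost big1 // => i _.
  move/existsPn: hall => /(_ i); rewrite negbK => /eqP ->; done.
have hi' : (val i <= m)%N by have := ltn_ord i.
have [hneg|hpos] : g i < 0 \/ 0 < g i by move: hgi; lia.
  have ha' := adm_sym ha.
  have hp : 0 < - g i by lia.
  have [y1 [g' [hadj hv1 ha1 hc1]]] := step hS hlh hn hy hx ha' hi' hp.
  have ha2 := adm_sym ha1.
  have hc2 : cost m (fun k => - g' k) = k.
    by rewrite cost_opp; move: hc1; rewrite cost_opp hc => [[]].
  have [p [hp1 hp2 hp3]] := IH _ _ _ hx hv1 ha2 hc2.
  exists (rcons p y); split.
  - by rewrite rcons_path hp1 hp2 (adj_sym hadj).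
  - by rewrite last_rcons.
  - by rewrite size_rcons hp3.
have [x1 [g' [hadj hv1 ha1 hc1]]] := step hS hlh hn hx hy ha hi' hpos.
have hc2 : cost m g' = k by move: hc1; rewrite hc => [[]].
have [p [hp1 hp2 hp3]] := IH _ _ _ hv1 hy ha1 hc2.
exists (x1 :: p); split => //=.
- by rewrite hadj hp1.
- by rewrite hp3.
Qed.

Fixpoint gf (c : int) (dl : nat -> int) (k : nat) : int :=
  if k is k'.+1 then gf c dl k' - dl k'.+1 else c.

Lemma gfE c dl k : gf c dl k = c - \sum_(1 <= i < k.+1) dl i.
Proof.
elim: k => [|k IH] /=; first by rewrite big_geq // subr0.
by rewrite IH [in RHS]big_nat_recr //= opprD addrA.
Qed.

Lemma sum_split m (dl : nat -> int) :
  \sum_(t < m.+2) dl (val t) = dl 0%N + \sum_(1 <= i < m.+1) dl i + dl m.+1.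
Proof.
rewrite -(big_mkord xpredT dl) big_nat_recr //= big_ltn //.
Qed.

Lemma adm_exists n m S (hn : (0 < n)%N) (B : nat) (x y : vtx m) :
  valid n S x -> valid n S y ->
  (forall k, (0 < k <= m)%N -> (`|X y k - X x k| <= B)%N) ->
  exists g, adm n x y g /\ forall k, (k <= m)%N -> (`|g k| <= n + k * B)%N.
Proof.
move=> hx hy hB.
set dl := fun k => X y k - X x k.
set c := ((- dl 0%N) %% n%:Z)%Z.
exists (gf c dl); split.
- split.
  + apply: (dvdB3 (dvdz0 _) (dvd_submod n%:Z (- dl 0%N))) => /=; rewrite /c /dl; lia.
  + have hs : (n%:Z %| \sum_(t < m.+2) dl (val t))%Z.
      rewrite (eq_bigr (fun t => y t - x t)); last by move=> t _; rewrite /dl !Xinord.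
      rewrite sumrB; apply: rpredB; [exact: valid_sum hy | exact: valid_sum hx].
    rewrite sum_split in hs.
    apply: (dvdB3 hs (dvdB3 (dvdz0 _) (dvd_submod n%:Z (- dl 0%N)) (erefl _))).
    rewrite gfE /c /dl; lia.
  + by move=> k hk; case: k hk => [|k] //= _; rewrite /dl; lia.
- elim => [|k IH] hk /=.
  + rewrite /c; lia.
  + have := IH (ltnW hk); have := hB k.+1 ltac:(lia); rewrite -/(dl k.+1); lia.
Qed.

Lemma ex_min (P : nat -> Prop) a : P a -> exists k, P k /\ forall j, P j -> (k <= j)%N.
Proof.
elim/ltn_ind: a => a IH Pa.
case: (classic (exists j, (j < a)%N /\ P j)) => [[j [hj Pj]]|hn].
  exact: (IH j hj Pj).
exists a; split => // j Pj; rewrite leqNgt; apply/negP => hj; apply: hn; by exists j.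
Qed.

Lemma ex_max (P : nat -> Prop) a B : P a -> (forall k, P k -> (k <= B)%N) ->
  exists k, P k /\ forall j, P j -> (j <= k)%N.
Proof.
move=> Pa hB.
have [t [[k0 [Pk0 ->]] hmin]] := @ex_min (fun t => exists k, P k /\ t = (B - k)%N) (B - a)%N
  (ex_intro _ a (conj Pa erefl)).
exists k0; split => // j Pj.
have := hmin (B - j)%N (ex_intro _ j (conj Pj erefl)).
have := hB _ Pj; have := hB _ Pk0; lia.
Qed.

Lemma dist_unique (T : eqType) (e : rel T) x y d d' :
  is_dist e x y d -> is_dist e x y d' -> d = d'.
Proof.
case=> [[p [hp1 hp2 hp3]] hmin] [[p' [hp1' hp2' hp3']] hmin'].
have := hmin _ hp1' hp2'; have := hmin' _ hp1 hp2; lia.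
Qed.

Lemma dist_char n m S (lo hi : int) (hS : forall z, S z = (lo <= z <= hi)) (hlh : lo < hi)
  (hn : (0 < n)%N) (x y : vtx m) d :
  valid n S x -> valid n S y ->
  (exists g, adm n x y g /\ cost m g = d) -> (forall g, adm n x y g -> (d <= cost m g)%N) ->
  is_dist (adj n S) x y d.
Proof.
move=> hx hy [g [ha hc]] hmin; split.
  have [p [h1 h2 h3]] := path_upper hS hlh hn hx hy ha hc.
  by exists p.
move=> p hp hl.
have [g' [ha' hc']] := path_lower hp.
rewrite hl in ha'; exact: leq_trans (hmin _ ha') hc'.
Qed.

Lemma dist_exists n m S (lo hi : int) (hS : forall z, S z = (lo <= z <= hi)) (hlh : lo < hi)
  (hn : (0 < n)%N) (x y : vtx m) :
  valid n S x -> valid n S y ->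
  exists d, [/\ is_dist (adj n S) x y d, (exists g, adm n x y g /\ cost m g = d) &
     (forall g, adm n x y g -> (d <= cost m g)%N)].
Proof.
move=> hx hy.
have [g0 [ha0 _]] := @adm_exists n m S hn (absz (hi - lo)) x y hx hy
  ltac:(move=> k hk; have := valid_mid hx hk; have := valid_mid hy hk; rewrite !hS; lia).
have [d [[g [ha hc]] hmin]] := @ex_min (fun k => exists g, adm n x y g /\ cost m g = k) _
  (ex_intro _ g0 (conj ha0 erefl)).
exists d; split => //.
- apply: (dist_char hS hlh hn hx hy) => //; first by exists g.
  by move=> g' ha'; apply: hmin; exists g'.
- by exists g.
- by move=> g' ha'; apply: hmin; exists g'.
Qed.

Lemma adm_transfer n m (x y x' y' : vtx m) g :
  (n%:Z %| (X y 0 - X x 0) - (X y' 0 - X x' 0))%Z ->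
  (n%:Z %| (X y m.+1 - X x m.+1) - (X y' m.+1 - X x' m.+1))%Z ->
  (forall k, (0 < k <= m)%N -> X y k - X x k = X y' k - X x' k) ->
  adm n x y g -> adm n x' y' g.
Proof.
move=> e0 e1 em [h0 h1 hm]; split.
- by apply: (dvdB3 h0 e0); lia.
- by apply: (dvdB3 h1 e1); lia.
- by move=> k hk; rewrite -em // hm.
Qed.

Lemma hS1 z : S01 z = (0 <= z <= 1).
Proof. rewrite /S01; apply/idP/idP; lia. Qed.

Lemma hS2 z : Sm101 z = (-1 <= z <= 1).
Proof. rewrite /Sm101; apply/idP/idP; lia. Qed.

Lemma dvd_sym (n a b : int) : (n %| a - b)%Z -> (n %| b - a)%Z.
Proof. by move=> h; apply: (dvdB3 (dvdz0 _) h); lia. Qed.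

Lemma dvd_eq0 (n a : int) : a = 0 -> (n %| a)%Z.
Proof. by move=> ->; apply: dvdz0. Qed.

Lemma ffX m (f : 'I_m.+2 -> int) k : X [ffun t => f t] k = f (inord k).
Proof. by rewrite /X ffunE. Qed.

Lemma Xzero m k : X (zero_vtx m) k = 0.
Proof. by rewrite /X ffunE. Qed.

Lemma valid_zero n m (S : pred int) : (0 < n)%N -> S 0 -> valid n S (zero_vtx m).
Proof.
move=> hn hS0; apply: validI.
  by move=> t; rewrite ffunE; case: ifP => _ //; rewrite lexx /=; lia.
by rewrite big1 ?dvdz0 // => t _; rewrite ffunE.
Qed.

Lemma inord_val_eq m k : (k <= m.+1)%N -> val (inord k : 'I_m.+2) = k.
Proof. by move=> hk; apply: inordK. Qed.

Lemma lift_pair n m (w : vtx m) : (0 < n)%N -> valid n Sm101 w ->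
  exists (x y : vtx m), [/\ valid n S01 x, valid n S01 y,
    (n%:Z %| (X y 0 - X x 0) - (X w 0 - X (zero_vtx m) 0))%Z,
    (n%:Z %| (X y m.+1 - X x m.+1) - (X w m.+1 - X (zero_vtx m) m.+1))%Z &
    (forall k, (0 < k <= m)%N -> X y k - X x k = X w k - X (zero_vtx m) k)].
Proof.
move=> hn hw.
pose xm (t : 'I_m.+2) : int := if is_end t then 0 else (if w t == -1 then 1 else 0).
pose A := \sum_t xm t.
pose x : vtx m := [ffun t => if val t == m.+1 then ((- A) %% n%:Z)%Z else xm t].
pose y : vtx m := [ffun t => if is_end t then ((x t + w t) %% n%:Z)%Z else x t + w t].
have hwt : forall t, if is_end t then (0 <= w t) && (w t < n%:Z) else (-1 <= w t <= 1).
  by move=> t; have := valid_pt t hw; rewrite hS2.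
have hvx : valid n S01 x.
  apply: validI.
    move=> t; rewrite ffunE /xm; case: (eqVneq (val t) m.+1) => [e|ne].
      by rewrite /is_end e eqxx orbT; apply/andP; split; lia.
    by case: (is_end t) => /=; [lia | rewrite hS1; case: eqP].
  have hc := @sum_cong n%:Z m.+2 x xm (fun t => if val t == m.+1 then - A else 0).
  rewrite sum_ind // in hc.
  apply: (dvdD3 (hc _) (dvdz0 _)); last by rewrite /A; lia.
  move=> t; rewrite ffunE; case: (eqVneq (val t) m.+1) => [e|ne].
    have -> : xm t = 0 by rewrite /xm /is_end e eqxx orbT.
    by apply: (dvdB3 (dvdz0 _) (dvd_submod n%:Z (- A))); lia.
  by rewrite !subr0 subrr dvdz0.
have hvy : valid n S01 y.
  apply: validI.
    move=> t; rewrite ffunE; case he : (is_end t).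
      by apply/andP; split; lia.
    rewrite hS1; have := hwt t; rewrite he => hwt'.
    rewrite ffunE; have -> : (val t == m.+1) = false.
      by apply/negbTE; move: he; rewrite /is_end; apply: contraFN => ->; rewrite orbT.
    by rewrite /xm he; case: eqP => e; lia.
  have hc := @sum_cong n%:Z m.+2 y x w.
  apply: (dvdD3 (hc _) (dvdD3 (valid_sum hvx) (valid_sum hw) (erefl _))); first last.
    by lia.
  move=> t; rewrite ffunE; case: ifP => _.
    by apply: (dvdB3 (dvdz0 _) (dvd_submod n%:Z (x t + w t))); lia.
  by apply: dvd_eq0; lia.
exists x, y; split => //.
- rewrite Xzero subr0 /X ffunE /is_end inord_val_eq //=.
  by apply: (dvdB3 (dvdz0 _) (dvd_submod n%:Z (x (inord 0) + w (inord 0)))); lia.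
- rewrite Xzero subr0 /X ffunE /is_end inord_val_eq // ?eqxx ?orbT.
  by apply: (dvdB3 (dvdz0 _) (dvd_submod n%:Z (x (inord m.+1) + w (inord m.+1)))); lia.
- move=> k hk; rewrite Xzero subr0 /X ffunE /is_end inord_val_eq; last by lia.
  have -> : (k == 0%N) || (k == m.+1) = false by lia.
  by rewrite addrC addKr.
Qed.

Lemma diff_vtx n m (x y : vtx m) : (0 < n)%N -> valid n S01 x -> valid n S01 y ->
  exists (w : vtx m), [/\ valid n Sm101 w,
    (n%:Z %| (X w 0 - X (zero_vtx m) 0) - (X y 0 - X x 0))%Z,
    (n%:Z %| (X w m.+1 - X (zero_vtx m) m.+1) - (X y m.+1 - X x m.+1))%Z &
    (forall k, (0 < k <= m)%N -> X w k - X (zero_vtx m) k = X y k - X x k)].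
Proof.
move=> hn hx hy.
pose w : vtx m := [ffun t => if is_end t then ((y t - x t) %% n%:Z)%Z else y t - x t].
exists w; split.
- apply: validI.
    move=> t; rewrite ffunE; case he : (is_end t).
      by apply/andP; split; lia.
    have := valid_pt t hx; have := valid_pt t hy; rewrite he !hS1 hS2; lia.
  have hc := @sum_cong n%:Z m.+2 w y (fun t => - x t).
  rewrite sumrN opprK in hc.
  have e : \sum_t w t = (\sum_t w t - \sum_t y t + \sum_t x t) - \sum_t x t + \sum_t y t.
    by rewrite addrK subrK.
  rewrite e; apply: rpredD; last exact: valid_sum hy.
  apply: rpredB; last exact: valid_sum hx.
  apply: hc => t; rewrite ffunE; case: ifP => _.
    by apply: (dvdB3 (dvdz0 _) (dvd_submod n%:Z (y t - x t))); lia.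
  by apply: dvd_eq0; lia.
- rewrite Xzero subr0 /X ffunE /is_end inord_val_eq //=.
  by apply: (dvdB3 (dvdz0 _) (dvd_submod n%:Z (y (inord 0) - x (inord 0)))); lia.
- rewrite Xzero subr0 /X ffunE /is_end inord_val_eq // ?eqxx ?orbT.
  by apply: (dvdB3 (dvdz0 _) (dvd_submod n%:Z (y (inord m.+1) - x (inord m.+1)))); lia.
- move=> k hk; rewrite Xzero subr0 /X ffunE /is_end inord_val_eq; last by lia.
  by have -> : (k == 0%N) || (k == m.+1) = false by lia.
Qed.

Lemma cost_bound n m g : (forall k, (k <= m)%N -> (`|g k| <= n + k * 1)%N) ->
  (cost m g <= m.+1 * (n + m))%N.
Proof.
move=> h; rewrite /cost.
apply: (@leq_trans (\sum_(i < m.+1) (n + m))%N).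
  apply: leq_sum => i _; have := h i (ltn_ord i); have := ltn_ord i; lia.
by rewrite sum_nat_const card_ord.
Qed.

Theorem theorem4p5 (n m : nat) : (1 <= n)%N ->
  exists D : nat,
    is_diam (Yoke_vtx n m) (Yoke_adj n m) D /\
    is_ecc (dYoke_vtx n m) (dYoke_adj n m) (zero_vtx m) D.
Proof.
move=> hn.
have lh1 : (0 : int) < 1 by [].
have lh2 : (-1 : int) < 1 by [].
pose Pd k := exists (x y : vtx m), [/\ valid n S01 x, valid n S01 y & is_dist (adj n S01) x y k].
have hz1 : valid n S01 (zero_vtx m) by apply: valid_zero.
have hz2 : valid n Sm101 (zero_vtx m) by apply: valid_zero.
have P0 : Pd 0%N.
  exists (zero_vtx m), (zero_vtx m); split => //; split; first by exists [::].
  by [].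
have hB : forall k, Pd k -> (k <= m.+1 * (n + m))%N.
  move=> k [x [y [hx hy hd]]].
  have [d [hd' _ hmin]] := dist_exists hS1 lh1 hn hx hy.
  rewrite (dist_unique hd hd').
  have [g [ha hg]] := @adm_exists n m S01 hn 1 x y hx hy
    ltac:(move=> k' hk; have := valid_mid hx hk; have := valid_mid hy hk; rewrite !hS1; lia).
  exact: leq_trans (hmin _ ha) (cost_bound hg).
have [D [PD hmax]] := ex_max P0 hB.
exists D; split.
- split.
    move=> x y hx hy.
    have [d [hd _ _]] := dist_exists hS1 lh1 hn hx hy.
    exists d => //; apply: hmax; by exists x, y.
  by case: PD => x [y [hx hy hd]]; exists x, y.
- split.
    move=> w hw.
    have [d [hd [g [ha hc]] hmin]] := dist_exists hS2 lh2 hn hz2 hw.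
    exists d => //.
    have [x [y [hx hy e0 e1 em]]] := lift_pair hn hw.
    apply: hmax; exists x, y; split => //.
    apply: (dist_char hS1 lh1 hn hx hy).
      exists g; split => //.
      apply: (adm_transfer _ _ _ ha); [exact: dvd_sym e0 | exact: dvd_sym e1 |].
      by move=> k hk; rewrite em.
    move=> g' ha'; apply: hmin.
    by apply: (adm_transfer e0 e1 em ha').
  case: PD => x [y [hx hy hd]].
  have [d [hd' [g [ha hc]] hmin]] := dist_exists hS1 lh1 hn hx hy.
  have e := dist_unique hd hd'.
  have [w [hw e0 e1 em]] := diff_vtx hn hx hy.
  exists w => //.
  apply: (dist_char hS2 lh2 hn hz2 hw).
    exists g; split; last by rewrite e hc.
    apply: (adm_transfer _ _ _ ha); [exact: dvd_sym e0 | exact: dvd_sym e1 |].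
    by move=> k hk; rewrite em.
  move=> g' ha'; rewrite e; apply: hmin.
  by apply: (adm_transfer e0 e1 em ha').
Qed.
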